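(* In the setting described in the context, if type A blowup occurs, then either $0<v_0<1$ and $\omega_0>-\frac{\nu}{2}f_0(v_0)$, or $v_0>1$ and $\omega_0<-\frac{\nu}{2}f_0(v_0)$.
   Context: Fix $\nu>0$, $v_0>0$ with $v_0\neq1$, and $\omega_0\in\mathbb{R}$. Consider the real ODE system $\frac{d\omega_{-2,i}}{dt}=\omega_{-2,i}^2\frac{1-2v_c^2+5v_c^4}{4v_c^2(1-v_c^2)^2}-\nu\omega_{-2,i}$, $\frac{dv_c}{dt}=-\omega_{-2,i}\frac{1+v_c^2}{4v_c(1-v_c^2)}$ with $v_c(0)=v_0$, $\omega_{-2,i}(0)=\omega_0$; its solution (continued through $v_c=1$) is characterized as follows. Let $F(v)=\frac{v(v^2-1)}{(v^2+1)^2}+\arctan v$, which is a strictly increasing bijection from $(0,\infty)$ onto $(0,\pi/2)$, and let $G(t)=F(v_0)+\frac{2\omega_0 v_0(1-e^{-\nu t})}{\nu(v_0^2-1)(v_0^2+1)^2}$. Then $v_c(t)$ is defined by $F(v_c(t))=G(t)$ for as long as $G(t)\in(0,\pi/2)$, and $\omega_{-2,i}(t)=\omega_0e^{-\nu t}\frac{v_0}{v_c(t)}\frac{v_c(t)^2-1}{v_0^2-1}\left(\frac{v_c(t)^2+1}{v_0^2+1}\right)^2$. Type A blowup means: there is a finite $t_c>0$ with $v_c(t)>0$ on $[0,t_c)$ and $v_c(t)\to0^+$ as $t\to t_c^-$. Type B blowup means: there is a finite $t_c>0$ with $v_c(t)\in(0,\infty)$ on $[0,t_c)$ and $v_c(t)\to+\infty$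 as $t\to t_c^-$. Here $f_0(x)=(x^2-1)^2+\frac{(x^2+1)^2}{x}(x^2-1)\arctan(x)$ and $f_\infty(x)=(x^2-1)^2+\frac{(x^2+1)^2}{x}(x^2-1)\left(\arctan(x)-\frac{\pi}{2}\right)$ for $x>0$. *)

(* Defs.v *)
From Stdlib Require Import Reals.
From Coquelicot Require Import Coquelicot.
Open Scope R_scope.

Definition Fv (v : R) : R := v * (v ^ 2 - 1) / (v ^ 2 + 1) ^ 2 + atan v.

Definition Gt (nu v0 w0 t : R) : R :=
  Fv v0 + 2 * w0 * v0 * (1 - exp (- nu * t))
          / (nu * (v0 ^ 2 - 1) * (v0 ^ 2 + 1) ^ 2).

Definition f0 (x : R) : R :=
  (x ^ 2 - 1) ^ 2 + (x ^ 2 + 1) ^ 2 / x * (x ^ 2 - 1) * atan x.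

Definition typeA_blowup (nu v0 w0 : R) : Prop :=
  exists (tc : R) (vc : R -> R),
    0 < tc /\
    (forall t, 0 <= t < tc -> 0 < vc t /\ Fv (vc t) = Gt nu v0 w0 t) /\
    filterlim vc (at_left tc) (locally 0).

(* Main.v *)
Require Import Defs.
From Stdlib Require Import Reals.
From Coquelicot Require Import Coquelicot.
From Stdlib Require Import Lra Psatz.
Open Scope R_scope.

Lemma Fv_der x : is_derive Fv x (8 * x ^ 2 / (x ^ 2 + 1) ^ 3).
Proof.
  unfold Fv. auto_derive.
  - nra.
  - field. nra.
Qed.

Lemma Fv_cont x : continuous Fv x.
Proof. apply (ex_derive_continuous (K:=R_AbsRing) (V:=R_NormedModule)). eexists. apply Fv_der. Qed.

Lemma Fv_pos v : 0 < v -> 0 < Fv v.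
Proof.
  intros Hv.
  destruct (MVT_gen Fv 0 v (fun x => 8 * x ^ 2 / (x ^ 2 + 1) ^ 3)) as [c [Hc Heq]].
  - intros; apply Fv_der.
  - intros; apply continuity_pt_filterlim, Fv_cont.
  - rewrite Rmin_left in Hc by lra. rewrite Rmax_right in Hc by lra.
    assert (F0 : Fv 0 = 0) by (unfold Fv; rewrite atan_0; field).
    rewrite F0 in Heq.
    destruct (Req_dec c 0) as [Hc0|Hc0].
    + (* derivative zero at c=0; use another point *)
      subst c.
      destruct (MVT_gen Fv (v/2) v (fun x => 8 * x ^ 2 / (x ^ 2 + 1) ^ 3)) as [d [Hd Heq2]].
      * intros; apply Fv_der.
      * intros; apply continuity_pt_filterlim, Fv_cont.
      * rewrite Rmin_left in Hd by lra. rewrite Rmax_right in Hd by lra.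
        (* Fv monotone nondecreasing on [0,v/2] gives Fv(v/2) >= 0 *)
        destruct (MVT_gen Fv 0 (v/2) (fun x => 8 * x ^ 2 / (x ^ 2 + 1) ^ 3)) as [e [He Heq3]].
        -- intros; apply Fv_der.
        -- intros; apply continuity_pt_filterlim, Fv_cont.
        -- rewrite F0 in Heq3.
           assert (0 <= 8 * e ^ 2 / (e ^ 2 + 1) ^ 3).
           { apply Rmult_le_pos. nra. left. apply Rinv_0_lt_compat, pow_lt. nra. }
           assert (0 < 8 * d ^ 2 / (d ^ 2 + 1) ^ 3).
           { apply Rmult_lt_0_compat. assert (0 < d) by lra. nra.
             apply Rinv_0_lt_compat, pow_lt. nra. }
           nra.
    + assert (0 < 8 * c ^ 2 / (c ^ 2 + 1) ^ 3).
      { apply Rmult_lt_0_compat. assert (0 < c) by lra. nra.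
        apply Rinv_0_lt_compat, pow_lt. nra. }
      nra.
Qed.

Theorem lemma3p2 (nu v0 w0 : R) :
  0 < nu -> 0 < v0 -> v0 <> 1 ->
  typeA_blowup nu v0 w0 ->
  (0 < v0 < 1 /\ w0 > - (nu / 2) * f0 v0) \/
  (v0 > 1 /\ w0 < - (nu / 2) * f0 v0).
Proof.
  intros Hnu Hv0 Hv1 [tc [vc [Htc [Hsol Hlim]]]].
  assert (HG : Gt nu v0 w0 tc = 0).
  { assert (L1 : filterlim (fun t => Fv (vc t)) (at_left tc) (locally 0)).
    { assert (F0 : Fv 0 = 0) by (unfold Fv; rewrite atan_0; field).
      pose proof (Fv_cont 0) as C. unfold continuous in C. rewrite F0 in C.
      eapply filterlim_comp. exact Hlim. exact C. }
    assert (L2 : filterlim (fun t => Gt nu v0 w0 t) (at_left tc) (locally 0)).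
    { eapply filterlim_ext_loc. 2: exact L1.
      exists (mkposreal tc Htc). intros y Hy Hlt.
      assert (Hy0 : 0 <= y < tc); [|exact (proj2 (Hsol y Hy0))]. split; [|lra].
      unfold ball in Hy; simpl in Hy; unfold AbsRing_ball, abs, minus, plus, opp in Hy; simpl in Hy.
      apply Rabs_lt_between in Hy. lra. }
    assert (L3 : filterlim (fun t => Gt nu v0 w0 t) (at_left tc) (locally (Gt nu v0 w0 tc))).
    { apply (filterlim_filter_le_1 (F := locally tc)).
      { intros P [d Hd]. exists d. intros y Hy _. apply Hd, Hy. }
      apply (ex_derive_continuous (K:=R_AbsRing) (V:=R_NormedModule)). unfold Gt. auto_derive. exact I. }
    apply (filterlim_locally_unique _ _ _ L3 L2). }
  pose proof (Fv_pos v0 Hv0) as HK.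
  set (K := Fv v0) in *.
  set (E := exp (- nu * tc)) in *.
  assert (HE0 : 0 < E) by apply exp_pos.
  assert (HE1 : E < 1).
  { unfold E. rewrite <- exp_0. apply exp_increasing. nra. }
  set (a := v0 ^ 2 - 1).
  set (b := (v0 ^ 2 + 1) ^ 2).
  assert (Hb : 0 < b) by (apply pow_lt; nra).
  assert (Hf0 : f0 v0 = K * b * a / v0).
  { unfold f0, K, Fv, a, b. field. nra. }
  unfold Gt in HG. fold K E in HG. fold a b in HG.
  assert (Ha : a <> 0).
  { unfold a; intro H. assert ((v0-1)*(v0+1) = 0) by nra.
    apply Rmult_integral in H0. destruct H0; lra. }
  assert (HG2 : K * nu * a * b + 2 * w0 * v0 * (1 - E) = 0).
  { replace (K * nu * a * b + 2 * w0 * v0 * (1 - E)) with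
      ((K + 2 * w0 * v0 * (1 - E) / (nu * a * b)) * (nu * a * b)) by (field; repeat split; lra).
    rewrite HG; ring. }
  rewrite Hf0.
  assert (Hgoal : - (nu / 2) * (K * b * a / v0) = - (nu * K * a * b) / (2 * v0)) by (field; lra).
  rewrite Hgoal.
  destruct (Rlt_or_le v0 1) as [Hlt|Hge].
  - left. split; [lra|].
    assert (Hal : a < 0) by (unfold a; nra).
    assert (0 < - (nu * K * a * b)).
    { assert (0 < nu * K * b) by (apply Rmult_lt_0_compat; [apply Rmult_lt_0_compat|]; lra). nra. }
    assert (Hw : 0 < w0 * v0) by nra.
    apply Rlt_gt. apply Rmult_lt_reg_r with (2 * v0); [lra|].
    unfold Rdiv. rewrite Rmult_assoc, Rinv_l by lra. nra.
  - right. assert (Hgt : v0 > 1) by lra. split; [lra|].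
    assert (Hal : a > 0) by (unfold a; nra).
    assert (0 < nu * K * a * b).
    { apply Rmult_lt_0_compat; [apply Rmult_lt_0_compat; [apply Rmult_lt_0_compat|]|]; lra. }
    assert (Hw : w0 * v0 < 0) by nra.
    apply Rmult_lt_reg_r with (2 * v0); [lra|].
    unfold Rdiv. rewrite Rmult_assoc, Rinv_l by lra. nra.
Qed.
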